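(* Let $G$ be a finite simple graph on the vertex set $\{x_{11},\ldots,x_{n1}\}$. For each $i=1,\ldots,n$ let $G_i$ be a graph on a vertex set $\{x_{i1},\ldots,x_{im_i}\}$ (these sets sharing only the indicated vertex $x_{i1}$ with $G$ and pairwise disjoint), where each $G_i$ is one of the following: (1) a connected chordal graph with at least two vertices such that $x_{i1}$ is a neighbor of some simplicial vertex of $G_i$; or (2) the cycle $C_5$ of length $5$. Then the graph $G'$ obtained by attaching $G_i$ to $G$ at the vertex $x_{i1}$ for each $i$ is vertex decomposable, hence shellable and sequentially Cohen--Macaulay.
   Context: Attaching $G_i$ to $G$ at $x_{i1}$ means forming the graph with vertex set $\bigcup_i V(G_i)$ and edge set $E(G)\cup\bigcup_i E(G_i)$. A graph is chordal if every cycle of length at least four has a chord; a vertex is simplicial if its neighbors form a clique. A graph $H$ is vertex decomposable if it has no edges, or else it has a vertex $x$ such that (1) both $H\setminus N_H[x]$ and $H\setminus\{x\}$ are vertex decomposable, and (2) for every independent set $S$ of $H\setminus N_H[x]$ there is $y\in N_H(x)$ with $S\cup\{y\}$ independent in $H\setminus\{x\}$. A graph is shellable if its independence complex (the simplicial complex of independent vertex sets) is shellable in the non-pure sense of Björner–Wachs, and sequentially Cohen--Macaulay if its edge ring $\mathbb{K}[x_v: v\in V]/(x_ux_v:\{u,v\}\in E)$ over a field $\mathbb{K}$ is sequentially Cohen--Macaulay. *)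

(* Defs.v *)
From mathcomp Require Import all_boot.
Set Implicit Arguments. Unset Strict Implicit. Unset Printing Implicit Defensive.

Section Graphs.
Variable T : finType.
Implicit Types (e : rel T) (S I F : {set T}).

Definition simple_graph e := irreflexive e /\ symmetric e.

Definition connected_graph e := forall u v : T, connect e u v.

(* a cycle of length >= 4: a duplicate-free sequence s, consecutive elements
   (cyclically) adjacent; a chord is an edge between two distinct vertices of s
   that are not cyclically consecutive in s *)
Definition chordal e :=
  forall s : seq T, uniq s -> 4 <= size s -> cycle e s ->
    exists x, exists y, [/\ x \in s, y \in s, x != y,
      (y != next s x) && (x != next s y) & e x y].

Definition simplicial e (v : T) :=
  forall u w, e v u -> e v w -> u != w -> e u w.

Definition indep e I := [forall u in I, forall v in I, ~~ e u v].

(* Vertex decomposability of the induced subgraph of e on the vertex set S.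
   N_H(x) = [set y in S | e x y], N_H[x] = x |: N_H(x). *)
Inductive vdec e : {set T} -> Prop :=
| vdec_noedge S :
    (forall u v, u \in S -> v \in S -> ~~ e u v) -> vdec e S
| vdec_shed S x :
    x \in S ->
    vdec e (S :\: (x |: [set y in S | e x y])) ->
    vdec e (S :\ x) ->
    (forall I, I \subset S :\: (x |: [set y in S | e x y]) -> indep e I ->
       exists2 y, y \in S /\ e x y & indep e (y |: I)) ->
    vdec e S.

Definition vertex_decomposable e := vdec e setT.

(* facets of the independence complex: maximal independent sets *)
Definition facet e F := indep e F /\ forall I, indep e I -> F \subset I -> I = F.

(* non-pure shellability (Bjorner--Wachs) of the independence complex:
   the facets can be ordered F_0, ..., F_{t-1} such that for all i < j there are
   k < j and x in F_j with F_i :&: F_j \subset F_k :&: F_j = F_j :\ x. *)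
Definition shellable e :=
  exists s : seq {set T},
    [/\ uniq s, (forall F, F \in s <-> facet e F) &
      forall i j, i < j -> j < size s ->
        exists k, exists x,
          [/\ k < j, x \in nth set0 s j,
              nth set0 s i :&: nth set0 s j \subset nth set0 s k :&: nth set0 s j
            & nth set0 s k :&: nth set0 s j = nth set0 s j :\ x]].
End Graphs.

Definition C5 : rel 'I_5 :=
  fun a b => (val b == (val a).+1 %% 5) || (val a == (val b).+1 %% 5).

Definition graph_iso (T1 T2 : finType) (e1 : rel T1) (e2 : rel T2) :=
  exists2 f : T1 -> T2, bijective f & forall a b, e2 (f a) (f b) = e1 a b.

(* The attached graph G'. Vertex (i, j) with j : 'I_(m i).+1 is x_{i,j+1};
   (i, ord0) is x_{i1}, the vertex of G. *)
Definition attach (n : nat) (m : 'I_n -> nat) (G : rel 'I_n)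
    (Gi : forall i, rel 'I_(m i).+1) : rel {i : 'I_n & 'I_(m i).+1} :=
  fun u v =>
    ((tag u == tag v) && Gi (tag u) (tagged u) (tagged_as u v))
    || [&& tagged u == ord0, tagged v == ord0 & G (tag u) (tag v)].

(* Main.v *)
Require Import Defs.
From mathcomp Require Import all_boot zify.
Set Implicit Arguments. Unset Strict Implicit. Unset Printing Implicit Defensive.

Section Chord.
Variable T : finType.
Variable e : rel T.
Hypothesis irr : irreflexive e.
Hypothesis sym : symmetric e.
Hypothesis ch : chordal e.

Lemma next_mid (q1 q2 : seq T) x y :
  uniq (q1 ++ x :: y :: q2) -> next (q1 ++ x :: y :: q2) x = y.
Proof.
move=> U; rewrite next_nth mem_cat inE eqxx orbT.
case: q1 U => [|z q1] /= U; first by rewrite eqxx.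
have zx : (x == z) = false.
  apply/negbTE; apply: contraNneq (proj1 (andP U)) => ->.
  by rewrite mem_cat inE eqxx orbT.
rewrite eq_sym zx index_cat.
have -> : (x \in q1) = false.
  apply/negbTE; move: U => /andP[_]; rewrite cat_uniq => /and3P[_ H _].
  by apply: contra H => xq; apply/hasP; exists x => //; rewrite inE eqxx.
by rewrite /= eqxx addn0 nth_cat ltnNge leqnSn /= subSn // subnn.
Qed.

Lemma splitE x (s : seq T) : x \in s -> exists p1 p2, s = p1 ++ x :: p2.
Proof. by case/splitPr => p1 p2; exists p1, p2. Qed.

Lemma sorted_short (p1 p3 p4 : seq T) x y :
  sorted e (p1 ++ x :: p3 ++ y :: p4) -> e x y -> sorted e (p1 ++ x :: y :: p4).
Proof.
have H : path e x (p3 ++ y :: p4) -> e x y -> path e x (y :: p4).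
  by rewrite cat_path /= => /and3P[_ _ ->] ->.
case: p1 => [|z p1] /=; first exact: H.
rewrite !cat_path /= => /and3P[-> -> P] exy /=.
by have /= := H P exy.
Qed.

Lemma chord_key a s t (F : seq T) :
  e a s -> e a t -> sorted e F -> uniq F -> head t F = s -> last s F = t ->
  2 <= size F ->
  (forall c, c \in F -> [|| c == s, c == t | (c != a) && ~~ e a c]) ->
  e s t.
Proof.
move=> eas eat.
elim: {F}(size F) {-2}F (leqnn (size F)) => [|N IH] F.
  by rewrite leqn0 => /eqP/size0nil ->.
move=> szF srt U hd lst sz2 Pc.
case: F srt U hd lst sz2 Pc szF => [//|s' W] srt U /= hd; subst s'.
move=> lst sz2 Pc szF.
case: W srt U lst sz2 Pc szF => [//|w W] srt U lst _ Pc szF.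
case: W srt U lst Pc szF => [|w2 W] srt U lst Pc szF.
  by move: srt lst => /= /andP[? _] <-.
case est: (e s t) => //; exfalso.
set F := [:: s, w, w2 & W] in srt U lst Pc szF.
set c := a :: F.
have aF : a \notin F.
  apply/negP => /Pc /or3P[/eqP as_|/eqP at_|/andP[/negP //]].
    by move: eas; rewrite as_ irr.
  by move: eat; rewrite at_ irr.
have Uc : uniq c by rewrite /c /= aF.
have cyc : cycle e c.
  rewrite /c /= rcons_path.
  move: srt lst => /= /and3P[-> -> ->] ->.
  by rewrite eas sym eat.
have szc : 4 <= size c by [].
have [x [y [xc yc xy /andP[nx ny] exy]]] := ch Uc szc cyc.
have nexta : next c a = s by rewrite /c /F (@next_mid [::] [:: w, w2 & W] a s).
have nextt : next c t = a.
  have <- : prev c a = t.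
    rewrite prev_nth /c mem_head; cbv iota beta; rewrite (memNindex aF).
    have := nth_last a (a :: F); rewrite [size _]/= [_.-1]/= => ->; exact: lst.
  by rewrite next_prev.
have key : forall x y, e x y -> y != next c x -> forall p1 p3 p4,
    F = p1 ++ x :: p3 ++ y :: p4 -> False.
  clear nx ny exy xy xc yc x y; move=> x y exy nxy p1 p3 p4 dF.
  case: p3 dF => [|z p3] dF.
    have U' : uniq ((a :: p1) ++ x :: y :: p4) by move: Uc; rewrite /c dF.
    have := next_mid U'; rewrite /= => E.
    by move: nxy; rewrite /c dF /= E eqxx.
  have := IH (p1 ++ x :: y :: p4).
  have sub : subseq (p1 ++ x :: y :: p4) F.
    rewrite dF; apply: cat_subseq => //=; rewrite eqxx.
    case: ifP => _; last exact: suffix_subseq.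
    exact: subseq_trans (subseq_cons _ _) (suffix_subseq _ _).
  move=> H; suff: e s t by rewrite est.
  apply: H.
  - have sF : size F = size (p1 ++ x :: (z :: p3) ++ y :: p4) by rewrite dF.
    move: szF sF; rewrite !size_cat /= size_cat /=; lia.
  - by apply: (@sorted_short p1 (z :: p3)) exy; rewrite -dF.
  - exact: subseq_uniq sub U.
  - have hF : head t F = s by [].
    by move: hF; rewrite dF; case: (p1).
  - have lF : last s F = t by [].
    by move: lF; rewrite dF !last_cat /= last_cat.
  - by rewrite size_cat /= addnS ltnS addnS.
  - by move=> c0 /(mem_subseq sub) /Pc.
have xa : x != a.
  apply/negP => /eqP xa; subst x.
  move: yc; rewrite inE eq_sym (negbTE xy) /= => /Pc /or3P[/eqP ys|/eqP yt|].
  - by move: nx; rewrite ys nexta eqxx.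
  - by move: ny; rewrite yt nextt eqxx.
  - by rewrite exy andbF.
have ya : y != a.
  apply/negP => /eqP ya; subst y.
  move: xc; rewrite inE (negbTE xa) /= => /Pc /or3P[/eqP xs|/eqP xt|].
  - by move: ny; rewrite xs nexta eqxx.
  - by move: nx; rewrite xt nextt eqxx.
  - by rewrite sym exy andbF.
have xF : x \in F by move: xc; rewrite /c in_cons (negbTE xa).
have : y \in F by move: yc; rewrite /c in_cons (negbTE ya).
have [p1 [p2 dF]] := splitE xF.
rewrite dF mem_cat in_cons eq_sym (negbTE xy) /= => /orP[] yp.
  have [q1 [q2 dp]] := splitE yp.
  by apply: (key y x _ ny q1 q2 p2); [rewrite sym | rewrite dF dp -catA].
have [q1 [q2 dp]] := splitE yp.
by apply: (key x y exy nx p1 q1 q2); rewrite dF dp.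
Qed.


Definition simp_in (S : {set T}) v :=
  forall u w, u \in S -> w \in S -> e v u -> e v w -> u != w -> e u w.

Lemma path_in (P : pred T) x p :
  path [rel u v | [&& e u v, u \in P & v \in P]] x p -> {subset p <= P}.
Proof.
elim: p x => [//|y p IH] x /= /andP[/and3P[_ _ yP] /IH H] z.
by rewrite inE => /orP[/eqP->|/H].
Qed.

Lemma Qlem (S : {set T}) a b : a \in S -> b \in S -> b != a -> ~~ e a b ->
  exists v, [/\ v \in S, v != a, ~~ e a v & simp_in S v].
Proof.
elim: {S}#|S| {-2}S (leqnn #|S|) a b => [|N IH] S.
  by rewrite leqn0 => /eqP/cards0_eq -> a b; rewrite inE.
move=> szS a b aS bS ba nab.
pose Nb := [set y in S | e a y].
pose T' := S :\: (a |: Nb).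
pose eT := [rel x y | [&& e x y, x \in T' & y \in T']].
pose C := [set c in T' | connect eT b c].
pose Sep := [set s in Nb | [exists c in C, e s c]].
pose H := C :|: Sep.
have T'P c : (c \in T') = [&& c \in S, c != a & ~~ e a c].
  rewrite !inE; case: (c \in S); rewrite ?andbF ?andbT //.
  by rewrite negb_or.
have bC : b \in C by rewrite inE connect0 T'P bS ba nab.
have CP c : c \in C -> [&& c \in S, c != a & ~~ e a c].
  by rewrite inE -T'P => /andP[].
have SepP s : s \in Sep -> s \in S /\ e a s.
  by rewrite !inE => /andP[/andP[]].
have symT : connect_sym eT.
  apply: sym_connect_sym => x y /=; rewrite sym.
  by case: (e y x); rewrite //= andbC.
have SepC s t : s \in Sep -> t \in Sep -> s != t -> e s t.
  move=> sS tS st; case est: (e s t) => //; exfalso.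
  have [sSS eas] := SepP s sS; have [tSS eat] := SepP t tS.
  move: sS tS; rewrite !inE => /andP[_ /exists_inP[c1 c1C esc1]].
  move=> /andP[_ /exists_inP[c2 c2C etc2]].
  have cc : connect eT c1 c2.
    move: c1C c2C; rewrite !inE => /andP[_ b1] /andP[_ b2].
    by apply: connect_trans b2; rewrite symT.
  move: etc2; case/connectP: cc => p P ->.
  case: (shortenP P) => p' P' U' _ etc2.
  have c1T : c1 \in T' by move: c1C; rewrite inE => /andP[].
  have inT c : c \in c1 :: p' -> c \in T'.
    by rewrite inE => /orP[/eqP->//|/(path_in P')].
  have := @chord_key a s t (s :: rcons (c1 :: p') t) eas eat.
  move=> Hk; suff: e s t by rewrite est.
  apply: Hk => //.
  - rewrite /= esc1 rcons_path (sub_path _ P').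
      by rewrite /= sym etc2.
    by move=> x y /and3P[].
  - have nT x : x \in c1 :: p' -> (x != s) && (x != t).
      move=> /inT; rewrite T'P => /and3P[_ _ na].
      by apply/andP; split; apply: contraNneq na => ->.
    have Hs : s \notin c1 :: p' by apply/negP => /nT; rewrite eqxx.
    have Ht : t \notin c1 :: p' by apply/negP => /nT; rewrite eqxx andbF.
    rewrite cons_uniq rcons_uniq U' Ht mem_rcons in_cons negb_or st Hs.
    by [].
  - by rewrite /= last_rcons.
  - move=> c; rewrite inE => /orP[->//|].
    rewrite mem_rcons inE => /orP[->|/inT]; first by rewrite orbT.
    by rewrite T'P => /and3P[_ -> ->]; rewrite !orbT.
have nbr v u : v \in C -> u \in S -> e v u -> u \in H.
  move=> vC uS evu; have /and3P[vS va nav] := CP v vC.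
  have ua : u != a by apply: contraNneq nav => <-; rewrite sym.
  case eau: (e a u).
    by rewrite !inE uS eau /=; apply/orP; right; apply/exists_inP; exists v; rewrite // sym.
  rewrite inE; apply/orP; left.
  have uT : u \in T' by rewrite T'P uS ua eau.
  rewrite inE uT; move: vC; rewrite inE => /andP[vT bv].
  by apply: connect_trans bv (connect1 _); rewrite /= evu vT uT.
have HS : H \subset S.
  apply/subsetP => x; rewrite inE => /orP[/CP/and3P[]//|/SepP[]//].
have aH : a \notin H.
  rewrite inE negb_or; apply/andP; split.
    by apply/negP => /CP; rewrite eqxx andbF.
  by apply/negP => /SepP[_]; rewrite irr.
have szH : #|H| <= N.
  have : #|H| <= #|S :\ a|.
    apply: subset_leq_card; apply/subsetP => x xH; rewrite !inE (subsetP HS) // andbT.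
    by apply: contraNneq aH => <-.
  by move: szS; rewrite (cardsD1 a S) aS; lia.
have fin v : v \in C -> simp_in H v ->
    exists v, [/\ v \in S, v != a, ~~ e a v & simp_in S v].
  move=> vC sv; have /and3P[vS va nav] := CP v vC.
  exists v; split => // u w uS wS evu evw uw.
  by apply: sv => //; apply: nbr vC _ _.
case: (boolP [forall x in H, forall y in H, (x == y) || e x y]) => [cl|ncl].
  exists b; split => // u w uS wS ebu ebw uw.
  have := forall_inP cl u (nbr b u bC uS ebu) => /forall_inP/(_ w (nbr b w bC wS ebw)).
  by rewrite (negbTE uw).
have [p pH /forall_inPn[q qH]] := forall_inPn ncl.
rewrite negb_or => /andP[pq npq].
have HC x : x \in H -> x \notin Sep -> x \in C.
  by rewrite inE => /orP[//|->].
case: (boolP [exists s in Sep, exists y in H, (y != s) && ~~ e s y]).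
  case/exists_inP => s sSep /exists_inP[y yH /andP[ys nsy]].
  have sH : s \in H by rewrite inE sSep orbT.
  have [v [vH vs nsv sv]] := IH H szH s y sH yH ys nsy.
  apply: (fin v) => //; apply: HC vH _; apply: contraNN nsv => vSep.
  by apply: SepC; rewrite // eq_sym.
move/exists_inPn => un.
have pC : p \in C.
  apply: HC pH _; apply/negP => pSep; move: (un p pSep).
  by apply/negP; rewrite negbK; apply/exists_inP; exists q; rewrite // eq_sym pq.
have qp : q != p by rewrite eq_sym.
have [v [vH vp npv sv]] := IH H szH p q pH qH qp npq.
apply: (fin v) => //; apply: HC vH _; apply/negP => vSep.
move: (un v vSep) => /exists_inPn /(_ p pH); rewrite negb_and negbK.
move=> /orP[/eqP pv|evp]; first by move: vp; rewrite pv eqxx.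
by move: npv evp; rewrite sym => ->.
Qed.


Lemma dirac (S : {set T}) u w : u \in S -> w \in S -> e u w ->
  exists v, exists x, [/\ v \in S, x \in S, e v x & simp_in S v].
Proof.
move=> uS wS euw.
pose S1 := [set y in S | [exists z in S, e y z]].
have S1P y : y \in S -> (y \in S1) = [exists z in S, e y z].
  by move=> yS; rewrite inE yS.
have uS1 : u \in S1 by rewrite S1P //; apply/exists_inP; exists w.
have [v [vS1 sv]] : exists v, v \in S1 /\ simp_in S1 v.
  case: (boolP [forall x in S1, forall y in S1, (x == y) || e x y]) => [cl|ncl].
    exists u; split => // x y xS yS _ _ xy.
    by move: (forall_inP cl x xS) => /forall_inP/(_ y yS); rewrite (negbTE xy).
  have [p pH /forall_inPn[q qH]] := forall_inPn ncl.
  rewrite negb_or => /andP[pq npq].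
  have qp : q != p by rewrite eq_sym.
  have [v [? _ _ ?]] := Qlem pH qH qp npq; by exists v.
have vS : v \in S by move: vS1; rewrite inE => /andP[].
have [x xS evx] : exists2 x, x \in S & e v x.
  by move: vS1; rewrite inE => /andP[_ /exists_inP].
exists v, x; split => // a b aS bS eva evb ab.
apply: sv => //.
  by rewrite S1P //; apply/exists_inP; exists v; rewrite // sym.
by rewrite S1P //; apply/exists_inP; exists v; rewrite // sym.
Qed.

End Chord.

Set Implicit Arguments. Unset Strict Implicit. Unset Printing Implicit Defensive.

Section Gen.
Variable T : finType.
Variable e : rel T.
Hypothesis irr : irreflexive e.
Hypothesis sym : symmetric e.

Lemma indepP (I : {set T}) :
  reflect (forall u v, u \in I -> v \in I -> ~~ e u v) (indep e I).
Proof.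
apply: (iffP forall_inP) => [H u v uI vI|H u uI].
  by move: (H u uI) => /forall_inP; apply.
by apply/forall_inP => v vI; apply: H.
Qed.

Lemma indep_sub (I J : {set T}) : J \subset I -> indep e I -> indep e J.
Proof.
move=> JI /indepP H; apply/indepP => u v uJ vJ.
by apply: H; apply: (subsetP JI).
Qed.

Lemma indep_add (I : {set T}) x : indep e I ->
  (forall z, z \in I -> ~~ e x z) -> indep e (x |: I).
Proof.
move=> /indepP H Hx; apply/indepP => u v; rewrite !inE.
move=> /orP[/eqP->|uI] /orP[/eqP->|vI]; rewrite ?irr //; first exact: Hx.
  by rewrite sym; apply: Hx.
exact: H.
Qed.

Definition nbhd (S : {set T}) x := S :\: (x |: [set y in S | e x y]).

Definition shed_ok (S : {set T}) x := x \in S /\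
  forall I : {set T}, I \subset nbhd S x -> indep e I ->
    exists2 y, y \in S /\ e x y & indep e (y |: I).

Lemma vdec_by (P : {set T} -> Prop) :
  (forall S, P S -> (forall u v, u \in S -> v \in S -> ~~ e u v) \/
     exists x, [/\ shed_ok S x, P (nbhd S x) & P (S :\ x)]) ->
  forall S, P S -> vdec e S.
Proof.
move=> H S; elim: {S}#|S| {-2}S (leqnn #|S|) => [|N IH] S szS PS.
  apply: vdec_noedge => u v; move: szS; rewrite leqn0 => /eqP/cards0_eq ->.
  by rewrite inE.
case: (H S PS) => [ne|[x [[xS sh] P1 P2]]]; first exact: vdec_noedge.
have c1 : #|S :\ x| <= N by move: szS; rewrite (cardsD1 x S) xS; lia.
have c2 : #|nbhd S x| <= #|S :\ x|.
  apply: subset_leq_card; apply/subsetP => y; rewrite !inE negb_or.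
  by case/andP=> /andP[-> _] ->.
apply: (vdec_shed xS); [apply: IH | apply: IH | exact: sh] => //.
exact: leq_trans c2 c1.
Qed.

Lemma simp_shed (S : {set T}) v x : v \in S -> x \in S -> e v x ->
  simp_in e S v -> shed_ok S x.
Proof.
move=> vS xS evx sv; split => // I IN /indepP HI.
exists v; first by rewrite sym.
have Hn z : z \in I -> ~~ e v z.
  move=> zI; have := subsetP IN z zI; rewrite !inE negb_or.
  move=> /andP[/andP[zx nzN] zS]; apply/negP => evz.
  have := sv x z xS zS evx evz; rewrite eq_sym zx => /(_ isT) exz.
  by move: nzN; rewrite zS exz.
apply: indep_add; last exact: Hn.
exact/indepP.
Qed.


Definition facet_on (S F : {set T}) := [/\ F \subset S, indep e F &
  forall I : {set T}, I \subset S -> indep e I -> F \subset I -> I = F].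

Lemma extend (S I : {set T}) : I \subset S -> indep e I ->
  exists2 F, facet_on S F & I \subset F.
Proof.
move: {2}(#|S| - #|I|) (erefl (#|S| - #|I|)) => k.
elim/ltn_ind: k I => k IH I dk IS iI.
case: (boolP [forall J : {set T},
   [&& J \subset S, indep e J & I \subset J] ==> (J == I)]) => [mx|].
  exists I => //; split => // J JS iJ IJ.
  by apply/eqP; move: (forallP mx J); rewrite JS iJ IJ.
case/forallPn => J; rewrite negb_imply => /andP[/and3P[JS iJ IJ] JI].
have pr : I \proper J.
  rewrite properEneq IJ andbT; apply: contra JI => /eqP->; done.
have c1 := proper_card pr.
have c2 := subset_leq_card JS.
have [F FS JF] := IH (#|S| - #|J|) (ltac:(lia)) J erefl JS iJ.
by exists F => //; apply: subset_trans JF.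
Qed.

Definition shell_cond (s : seq {set T}) := forall i j, i < j -> j < size s ->
  exists k, exists x,
    [/\ k < j, x \in nth set0 s j,
        nth set0 s i :&: nth set0 s j \subset nth set0 s k :&: nth set0 s j
      & nth set0 s k :&: nth set0 s j = nth set0 s j :\ x].

Definition shell_on (S : {set T}) := exists s : seq {set T},
  [/\ uniq s, (forall F, F \in s <-> facet_on S F) & shell_cond s].

Lemma vdec_shell S : vdec e S -> shell_on S.
Proof.
elim=> {S} [S ne|S x xS _ [s2 [U2 M2 C2]] _ [s1 [U1 M1 C1]] Hsh].
  have iS : indep e S by apply/indepP.
  exists [:: S]; split => //; last by move=> i j ij; rewrite ltnS leqn0 => /eqP jz; rewrite jz in ij.
  move=> F; rewrite inE; split => [/eqP->|[FS iF mF]].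
    by split => // I IS _ SI; apply/eqP; rewrite eqEsubset IS SI.
  by apply/eqP/esym; apply: mF => //; apply: subxx.
pose S2 := nbhd S x.
have S2P z : (z \in S2) = [&& z \in S, z != x & ~~ e x z].
  rewrite !inE negb_or; case: (z \in S); rewrite ?andbF ?andbT //.
have xS2 : x \notin S2 by rewrite S2P eqxx andbF.
have f1 F : facet_on (S :\ x) F -> facet_on S F.
  case=> FS iF mF; have FS' : F \subset S.
    by apply: subset_trans FS _; apply/subsetP => z; rewrite in_setD1 => /andP[].
  split => // I IS iI FI.
  case xI : (x \in I); last first.
    by apply: mF => //; apply/subsetP => z zI; rewrite !inE (subsetP IS) // andbT; apply: contraFneq xI => <-.
  exfalso.
  have FS2 : F \subset S2.
    apply/subsetP => z zF; rewrite S2P (subsetP FS') //=.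
    have /andP[-> _] : (z != x) && (z \in S) by have := subsetP FS z zF; rewrite !inE.
    by move/indepP: iI; apply => //; apply: (subsetP FI).
  have [y [yS exy] iy] := Hsh F FS2 iF.
  have yF : y \in F.
    have yx : y != x by apply: contraTneq exy => ->; rewrite irr.
    have sub : y |: F \subset S :\ x.
      apply/subsetP => z; rewrite in_setU1 => /orP[/eqP->|zF]; first by rewrite !inE yx yS.
      exact: (subsetP FS).
    have eq := mF (y |: F) sub iy (subsetU1 _ _).
    by rewrite -eq setU11.
  by move/indepP: iI => /(_ x y xI (subsetP FI y yF)); rewrite exy.
have f2 A : facet_on S2 A -> facet_on S (x |: A).
  case=> AS iA mA; split.
  - apply/subsetP => z; rewrite in_setU1 => /orP[/eqP->//|zA].
    by have := subsetP AS z zA; rewrite S2P => /andP[].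
  - apply: indep_add => // z zA; have := subsetP AS z zA.
    by rewrite S2P => /and3P[].
  move=> I IS iI xAI.
  have xI : x \in I by apply: (subsetP xAI); rewrite setU11.
  have IxS2 : I :\ x \subset S2.
    apply/subsetP => z; rewrite in_setD1 => /andP[zx zI].
    rewrite S2P zx (subsetP IS) //=.
    by move/indepP: iI; apply.
  have xA : x \notin A by apply: contra xS2; apply: (subsetP AS).
  have AI : A \subset I :\ x.
    apply/subsetP => z zA; rewrite in_setD1 (subsetP xAI) ?andbT; last by rewrite in_setU1 zA orbT.
    by apply: contraNneq xA => <-.
  have eq := mA (I :\ x) IxS2 (indep_sub (subD1set I x) iI) AI.
  by rewrite -eq setD1K.
have f3 F : facet_on S F -> x \notin F -> facet_on (S :\ x) F.
  case=> FS iF mF xF; split => //.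
    apply/subsetP => z zF; rewrite in_setD1 (subsetP FS) // andbT.
    by apply: contraNneq xF => <-.
  move=> I IS iI FI; apply: mF => //; apply: subset_trans IS _.
  exact: subD1set.
have f4 F : facet_on S F -> x \in F -> facet_on S2 (F :\ x).
  case=> FS iF mF xF.
  have FxS2 : F :\ x \subset S2.
    apply/subsetP => z; rewrite in_setD1 => /andP[zx zF].
    rewrite S2P zx (subsetP FS) //=.
    by move/indepP: iF; apply.
  split => //; first exact: indep_sub (subD1set F x) iF.
  move=> I IS2 iI FI.
  have xI : x \notin I by apply: contra xS2; apply: (subsetP IS2).
  have eq : x |: I = F.
    apply: mF.
    - apply/subsetP => z; rewrite in_setU1 => /orP[/eqP->//|zI].
      by have := subsetP IS2 z zI; rewrite S2P => /andP[].
    - apply: indep_add => // z zI; have := subsetP IS2 z zI.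
      by rewrite S2P => /and3P[].
    - apply/subsetP => z zF; rewrite in_setU1; case: (eqVneq z x) => //= zx.
      by apply: (subsetP FI); rewrite in_setD1 zx.
  by rewrite -eq setU1K.
have s2x A : A \in s2 -> x \notin A.
  by move=> /M2 [AS _ _]; apply: contra xS2; apply: (subsetP AS).
have s1x F : F \in s1 -> x \notin F.
  by move=> /M1 [FS _ _]; apply/negP => /(subsetP FS); rewrite in_setD1 eqxx.
exists (s1 ++ map (fun A => x |: A) s2); split.
- rewrite cat_uniq U1 map_inj_in_uniq ?U2 ?andbT; last first.
    move=> A B A2 B2 eq; rewrite -(setU1K (s2x A A2)) -(setU1K (s2x B B2)).
    by rewrite eq.
  apply/hasPn => F /mapP[A A2 ->]; apply/negP => /s1x.
  by rewrite setU11.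
- move=> F; rewrite mem_cat; split.
    case/orP => [/M1/f1 //|/mapP[A /M2 fA ->]]; exact: f2.
  move=> fF; case xF: (x \in F).
    apply/orP; right; apply/mapP; exists (F :\ x); last by rewrite setD1K.
    by apply/M2; apply: f4.
  by apply/orP; left; apply/M1; apply: f3 => //; rewrite xF.
move=> i j ij; rewrite size_cat size_map => js.
have nthE k : k < size s1 + size s2 ->
    nth set0 (s1 ++ map (fun A => x |: A) s2) k =
    if k < size s1 then nth set0 s1 k else x |: nth set0 s2 (k - size s1).
  move=> ks; rewrite nth_cat; case: ifP => // kl.
  by rewrite (nth_map set0) //; move: kl ks; rewrite ltnNge => /negbFE; lia.
case: (ltnP j (size s1)) => jl.
  have il : i < size s1 by apply: ltn_trans ij jl.
  have [k [z [kj zj sub eq]]] := C1 i j ij jl.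
  exists k, z; rewrite !nthE ?il ?jl ?(ltn_trans kj jl); try lia.
  by split.
have j2 : j - size s1 < size s2 by lia.
set Aj := nth set0 s2 (j - size s1).
have AjF : facet_on S2 Aj by apply/M2; apply: mem_nth.
have xAj : x \notin Aj by apply: s2x; apply: mem_nth.
case: (ltnP i (size s1)) => il.
  have [AjS iAj _] := AjF.
  have AjS' : Aj \subset S :\ x.
    apply/subsetP => z zA; have := subsetP AjS z zA; rewrite S2P in_setD1.
    by case/and3P => -> -> _.
  have [F' fF' AF'] := extend AjS' iAj.
  have F's1 : F' \in s1 by apply/M1.
  have xF' := s1x F' F's1.
  exists (index F' s1), x.
  have ki : index F' s1 < size s1 by rewrite index_mem.
  rewrite !nthE ?il ?ki ?(leq_gtF jl); try lia.
  rewrite nth_index //; split.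
  - exact: leq_trans ki jl.
  - by rewrite setU11.
  - apply/subsetP => u; rewrite !inE => /andP[uF /orP[/eqP ux|uA]].
      by move: (s1x _ (mem_nth set0 il)); rewrite -ux uF.
    by rewrite uA orbT andbT (subsetP AF').
  - apply/setP => u; rewrite !inE; case: (eqVneq u x) => [->|ux] /=.
      by rewrite (negbTE xF').
    by case uA: (u \in Aj); rewrite ?andbF ?andbT // (subsetP AF').
have i2 : i - size s1 < j - size s1 by lia.
have [k [z [kj zj sub eqk]]] := C2 (i - size s1) (j - size s1) i2 j2.
exists (size s1 + k), z.
rewrite !nthE ?(leq_gtF jl) ?(leq_gtF il) ?ltnNge ?leq_addr /=; try lia.
rewrite addKn -/Aj; split.
- lia.
- by rewrite in_setU1 zj orbT.
- apply/subsetP => u; rewrite !in_setI !in_setU1.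
  case: (eqVneq u x) => //= ux /andP[ui uj].
  by have := subsetP sub u; rewrite !in_setI ui uj => /(_ isT) /andP[-> _].
- have zx : z != x by apply: contraNneq xAj => <-.
  apply/setP => u; rewrite in_setI in_setD1 !in_setU1; case: (eqVneq u x) => [->|ux] /=.
    by rewrite eq_sym zx.
  by move/setP/(_ u): eqk; rewrite in_setI in_setD1.
Qed.

Lemma shell_top : vdec e setT -> shellable e.
Proof.
move=> /vdec_shell [s [U M C]]; exists s; split => // F; rewrite M.
split => [[_ iF mF]|[iF mF]].
  by split => // I iI FI; apply: mF => //; apply: subsetT.
split => // I _; exact: mF.
Qed.
End Gen.

Unset Implicit Arguments.
Unset Strict Implicit.


Definition O5 : seq 'I_5 := [:: @Ordinal 5 0 isT; @Ordinal 5 1 isT; @Ordinal 5 2 isT; @Ordinal 5 3 isT; @Ordinal 5 4 isT].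
Lemma memO5 (a : 'I_5) : a \in O5.
Proof. by case: a => [[|[|[|[|[|k]]]]] Hk] //; rewrite !inE /=; apply/orP; do ?[left; apply/eqP/val_inj; done|right]. Qed.

Definition c5b := all (fun a0 => has (fun p1 => has (fun p2 => has (fun p3 => has (fun p4 =>
  [&& C5 a0 p1, C5 a0 p4, C5 p2 p3,
      all (fun b => C5 p1 b ==> (b == a0) || (b == p2)) O5,
      all (fun b => C5 p4 b ==> (b == a0) || (b == p3)) O5,
      all (fun b => C5 p2 b ==> (b == p1) || (b == p3)) O5,
      all (fun b => C5 p3 b ==> (b == p2) || (b == p4)) O5,
      all (fun b => (b == a0) || [|| b == p1, b == p2, b == p3 | b == p4]) O5,
      C5 p1 p2 & C5 p4 p3]) O5) O5) O5) O5) O5.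
Lemma c5bT : c5b. Proof. vm_compute. reflexivity. Qed.

Lemma c5_struct (a0 : 'I_5) : exists p1 p2 p3 p4,
  [/\ C5 a0 p1, C5 a0 p4, C5 p2 p3,
      (forall b, C5 p1 b -> (b == a0) || (b == p2)) &
      (forall b, C5 p4 b -> (b == a0) || (b == p3))] /\
  [/\ (forall b, C5 p2 b -> (b == p1) || (b == p3)),
      (forall b, C5 p3 b -> (b == p2) || (b == p4)),
      (forall b, (b == a0) || [|| b == p1, b == p2, b == p3 | b == p4]),
      C5 p1 p2 & C5 p4 p3].
Proof.
have := allP c5bT a0 (memO5 a0).
case/hasP => p1 _ /hasP[p2 _ /hasP[p3 _ /hasP[p4 _]]].
case/and5P => h1 h2 h3 h4 /and5P[h5 h6 h7 h8 /andP[h9 h10]].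
exists p1, p2, p3, p4; split; split => // b.
- by move=> hb; exact: (implyP (allP h4 b (memO5 b)) hb).
- by move=> hb; exact: (implyP (allP h5 b (memO5 b)) hb).
- by move=> hb; exact: (implyP (allP h6 b (memO5 b)) hb).
- by move=> hb; exact: (implyP (allP h7 b (memO5 b)) hb).
- exact: (allP h8 b (memO5 b)).
Qed.

Section Main.
Variables (n : nat) (m : 'I_n -> nat) (G : rel 'I_n)
    (Gi : forall i, rel 'I_(m i).+1).
Hypothesis sG : simple_graph G.
Hypothesis sGi : forall i : 'I_n, simple_graph (Gi i).
Hypothesis hyp : forall i : 'I_n,
     (connected_graph (Gi i) /\ 1 <= m i /\ chordal (Gi i) /\
      exists v, simplicial (Gi i) v /\ Gi i ord0 v)
     \/ graph_iso C5 (Gi i).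

Local Notation V := {i : 'I_n & 'I_(m i).+1}.
Local Notation tg i a := (@existT 'I_n (fun i0 => 'I_(m i0).+1) i a).
Local Notation E := (attach G Gi).

Lemma E_same (i : 'I_n) (a b : 'I_(m i).+1) : E (tg i a) (tg i b) = Gi i a b.
Proof.
rewrite /attach /= eqxx /= tagged_asE.
by rewrite (proj1 sG i) !andbF orbF.
Qed.

Lemma E_diff (i j : 'I_n) (a : 'I_(m i).+1) (b : 'I_(m j).+1) : i != j ->
  E (tg i a) (tg j b) = [&& a == ord0, b == ord0 & G i j].
Proof. by move=> ij; rewrite /attach /= (negbTE ij). Qed.

Lemma irrE : irreflexive E.
Proof. by case=> i a; rewrite E_same (proj1 (sGi i)). Qed.

Lemma symE : symmetric E.
Proof.
case=> i a [j b]; case: (eqVneq i j) => [eij|ij].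
  by subst j; rewrite !E_same (proj2 (sGi i)).
have ji : j != i by rewrite eq_sym.
rewrite (E_diff i j a b ij) (E_diff j i b a ji) (proj2 sG i j).
by case: (a == ord0); case: (b == ord0).
Qed.


Lemma gadget_c5 (i : 'I_n) : graph_iso C5 (Gi i) -> exists q1 q2 q3 q4 : 'I_(m i).+1,
 [/\ Gi i ord0 q1, Gi i ord0 q4, Gi i q2 q3,
     (forall c, Gi i q1 c -> (c == ord0) || (c == q2)) &
     (forall c, Gi i q4 c -> (c == ord0) || (c == q3))] /\
 [/\ (forall c, Gi i q2 c -> (c == q1) || (c == q3)),
     (forall c, Gi i q3 c -> (c == q2) || (c == q4)),
     (forall c, (c == ord0) || [|| c == q1, c == q2, c == q3 | c == q4]),
     Gi i q1 q2 & Gi i q4 q3].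
Proof.
case=> f [g fg gf] fE.
have [p1 [p2 [p3 [p4 [[h1 h2 h3 h4 h5] [h6 h7 h8 h9 h10]]]]]] := c5_struct (g ord0).
have GE a c : Gi i (f a) c = C5 a (g c) by rewrite -{1}(gf c) fE.
have feq a c : (g c == a) = (c == f a).
  by apply/eqP/eqP => [<-|->]; rewrite ?fg ?gf.
have f0 : f (g ord0) = ord0 by rewrite gf.
have ge0 c : (g c == g ord0) = (c == ord0) by rewrite (can_eq gf).
exists (f p1), (f p2), (f p3), (f p4); split; split.
- by rewrite -f0 fE.
- by rewrite -f0 fE.
- by rewrite fE.
- by move=> c; rewrite GE => /h4; rewrite ge0 feq.
- by move=> c; rewrite GE => /h5; rewrite ge0 feq.
- by move=> c; rewrite GE => /h6; rewrite !feq.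
- by move=> c; rewrite GE => /h7; rewrite !feq.
- by move=> c; have := h8 (g c); rewrite ge0 !feq.
- by rewrite fE.
- by rewrite fE.
Qed.

Lemma base (i : 'I_n) (T : {set 'I_(m i).+1}) (a b : 'I_(m i).+1) :
  ord0 \notin T -> a \in T -> b \in T -> Gi i a b ->
  exists v x, [/\ v \in T, x \in T, Gi i v x & simp_in (Gi i) T v].
Proof.
move=> o0 aT bT eab.
have [irr sym] := sGi i.
case: (hyp i) => [[_ [_ [ch _]]]|iso].
  by have [v [x H]] := dirac irr sym ch aT bT eab; exists v, x.
have [q1 [q2 [q3 [q4 [[h1 h2 h3 h4 h5] [h6 h7 h8 h9 h10]]]]]] := gadget_c5 i iso.
have uniq1 v x : v \in T -> x \in T -> Gi i v x ->
    (forall c, c \in T -> Gi i v c -> c = x) ->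
    exists v x, [/\ v \in T, x \in T, Gi i v x & simp_in (Gi i) T v].
  move=> vT xT evx H; exists v, x; split => // u w uT wT evu evw uw.
  by move: uw; rewrite (H u uT evu) (H w wT evw) eqxx.
have nT0 c : c \in T -> c != ord0 by move=> cT; apply: contraNneq o0 => <-.
case q12 : ((q1 \in T) && (q2 \in T)).
  case/andP: q12 => q1T q2T; apply: (uniq1 q1 q2) => // c cT /h4.
  by rewrite (negbTE (nT0 c cT)) => /eqP.
case q43 : ((q4 \in T) && (q3 \in T)).
  case/andP: q43 => q4T q3T; apply: (uniq1 q4 q3) => // c cT /h5.
  by rewrite (negbTE (nT0 c cT)) => /eqP.
have := h8 a; rewrite (negbTE (nT0 a aT)) /=.
case/or4P => /eqP ea; subst a.
- have := h4 b eab; rewrite (negbTE (nT0 b bT)) /= => /eqP eb; subst b.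
  by rewrite aT bT in q12.
- have := h6 b eab; case/orP => /eqP eb; subst b; first by rewrite aT bT in q12.
  apply: (uniq1 q2 q3) => // c cT /h6 /orP[/eqP ec|/eqP //]; subst c.
  by rewrite aT cT in q12.
- have := h7 b eab; case/orP => /eqP eb; subst b; last by rewrite aT bT in q43.
  apply: (uniq1 q3 q2) => // c cT /h7 /orP[/eqP //|/eqP ec]; subst c.
  by rewrite aT cT in q43.
- have := h5 b eab; rewrite (negbTE (nT0 b bT)) /= => /eqP eb; subst b.
  by rewrite aT bT in q43.
Qed.

Lemma tgne (i j : 'I_n) (a : 'I_(m i).+1) (b : 'I_(m j).+1) : i != j -> tg i a != tg j b.
Proof. by move=> ij; apply: contra ij => /eqP H; apply/eqP; exact: (congr1 tag H). Qed.

Lemma nbE (i : 'I_n) (q : 'I_(m i).+1) u : q != ord0 -> E (tg i q) u ->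
  exists c, u = tg i c /\ Gi i q c.
Proof.
case: u => j c q0; case: (eqVneq i j) => [eij|ij].
  by subst j; rewrite E_same => qc; exists c.
by rewrite (E_diff i j q c ij) (negbTE q0).
Qed.

Lemma nbhdE (S : {set V}) x z :
  (z \in nbhd E S x) = [&& z \in S, z != x & ~~ E x z].
Proof.
rewrite /nbhd !inE negb_or; case: (z \in S); rewrite ?andbF ?andbT //.
Qed.

Definition Pst (S : {set V}) :=
  forall i : 'I_n, tg i ord0 \in S -> [set u : V | tag u == i] \subset S.

Lemma c5_shed (S : {set V}) (i : 'I_n) : graph_iso C5 (Gi i) ->
  [set u : V | tag u == i] \subset S -> shed_ok E S (tg i ord0).
Proof.
move=> iso gS.
have inG c : tg i c \in S by apply: (subsetP gS); rewrite inE /=.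
have [irr sym] := sGi i.
have [q1 [q2 [q3 [q4 [[h1 h2 h3 h4 h5] [h6 h7 h8 h9 h10]]]]]] := gadget_c5 i iso.
split; first exact: inG.
move=> I IN iI.
have xI : tg i ord0 \notin I.
  by apply/negP => /(subsetP IN); rewrite nbhdE eqxx andbF.
have q0 q : Gi i ord0 q -> q != ord0.
  by move=> e0; apply: contraTneq e0 => ->; rewrite irr.
have pick (y z : 'I_(m i).+1) : Gi i ord0 y -> tg i z \notin I ->
    (forall c, Gi i y c -> (c == ord0) || (c == z)) ->
    exists2 y0, y0 \in S /\ E (tg i ord0) y0 & indep E (y0 |: I).
  move=> e0y zI Hy; exists (tg i y); first by rewrite E_same inG.
  apply: (indep_add irrE symE) => // u uI; apply/negP => /(nbE i y u (q0 _ e0y)) [c [uc eyc]].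
  subst u; case/orP: (Hy c eyc) => /eqP ec; subst c; first by rewrite uI in xI.
  by rewrite uI in zI.
case Z1 : (tg i q2 \in I).
  have Z4 : tg i q3 \notin I.
    apply/negP => Z4; move/indepP: iI => /(_ _ _ Z1 Z4).
    by rewrite E_same h3.
  exact: pick h2 Z4 h5.
by apply: pick h1 _ h4; rewrite Z1.
Qed.

Lemma main_vdec : vdec E setT.
Proof.
apply: (vdec_by (P := Pst)); last by move=> i _; apply: subsetT.
move=> S PS.
case: (boolP [exists i, tg i ord0 \in S]) => [/existsP [i rS] | nr].
  right; exists (tg i ord0); have gS := PS i rS.
  have inG c : tg i c \in S by apply: (subsetP gS); rewrite inE /=.
  split.
  - case: (hyp i) => [[_ [_ [_ [v [sv e0v]]]]]|iso]; last exact: c5_shed.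
    have [irr sym] := sGi i.
    have v0 : v != ord0 by apply: contraTneq e0v => ->; rewrite irr.
    apply: (simp_shed irrE symE (v := tg i v)) => //; first by rewrite E_same sym.
    move=> u w _ _ /(nbE i v u v0) [c [-> evc]] /(nbE i v w v0) [d [-> evd]] cd.
    rewrite E_same; apply: sv => //; apply: contra cd => /eqP->; done.
  - move=> j; rewrite nbhdE => /and3P[rjS rjx nE].
    case: (eqVneq i j) => [eij|ij]; first by subst j; rewrite eqxx in rjx.
    apply/subsetP => u; rewrite inE; case: u => k c /= /eqP ek; subst k.
    rewrite nbhdE (subsetP (PS j rjS)) ?inE //= eq_sym tgne //=.
    case c0: (c == ord0); first by move/eqP: c0 => c0; subst c.
    by rewrite E_diff // c0 andbF.
  - move=> j; rewrite in_setD1 => /andP[rjx rjS].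
    case: (eqVneq i j) => [eij|ij]; first by subst j; rewrite eqxx in rjx.
    apply/subsetP => u; rewrite inE; case: u => k c /= /eqP ek; subst k.
    by rewrite in_setD1 (subsetP (PS j rjS)) ?inE //= eq_sym tgne.
have nrS i : tg i ord0 \notin S by move/existsPn: nr; apply.
case: (boolP [exists u in S, exists w in S, E u w]) => [|ne]; last first.
  left => u w uS wS; apply/negP => euw.
  by move/exists_inPn: ne => /(_ u uS) /exists_inPn /(_ w wS); rewrite euw.
case/exists_inP => -[i a] uS /exists_inP[[j b] wS euw].
case: (eqVneq i j) => [eij|ij]; last first.
  move: euw; rewrite E_diff //; case/and3P => /eqP a0 _ _; subst a.
  by case/negP: (nrS i).
subst j; rewrite E_same in euw.
pose T := [set c | tg i c \in S].
have o0 : ord0 \notin T by rewrite inE.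
have aT : a \in T by rewrite inE.
have bT : b \in T by rewrite inE.
have [v [x [vT xT evx sv]]] := base i T a b o0 aT bT euw.
have v0 : v != ord0 by apply: contraNneq o0 => <-.
right; exists (tg i x); split.
- apply: (simp_shed irrE symE (v := tg i v)).
  + by move: vT; rewrite inE.
  + by move: xT; rewrite inE.
  + by rewrite E_same.
  move=> u w uS' wS' /(nbE i v u v0) [c [ec evc]] /(nbE i v w v0) [d [ed evd]] cd.
  subst u w; rewrite E_same; apply: sv => //; rewrite ?inE //.
  by apply: contra cd => /eqP->.
- by move=> j; rewrite nbhdE => /and3P[rjS _ _]; by case/negP: (nrS j).
- by move=> j; rewrite in_setD1 => /andP[_ rjS]; by case/negP: (nrS j).
Qed.
End Main.

Theorem corollary2p6 (n : nat) (m : 'I_n -> nat) (G : rel 'I_n)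
    (Gi : forall i, rel 'I_(m i).+1) :
  simple_graph G ->
  (forall i, simple_graph (Gi i)) ->
  (forall i,
     (connected_graph (Gi i) /\ 1 <= m i /\ chordal (Gi i) /\
      exists v, simplicial (Gi i) v /\ Gi i ord0 v)
     \/ graph_iso C5 (Gi i)) ->
  vertex_decomposable (attach G Gi) /\ shellable (attach G Gi).
Proof.
move=> sG sGi hyp.
have VD := @main_vdec _ _ _ _ sG sGi hyp.
split; first exact: VD.
exact: (shell_top (@irrE _ _ _ _ sG sGi) (@symE _ _ _ _ sG sGi) VD).
Qed.
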